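(* Let $g:\mathrm{dom}(g)\to\mathbb{R}^s$ be a $C^{m+1}$ function, $\mathrm{dom}(g)\subset\mathbb{R}^u$, and let $\mathrm x_0\in\mathrm{dom}(g)$. Assume there exists $\delta>0$ such that $\{(\mathrm x,g(\mathrm x)):\|\mathrm x-\mathrm x_0\|\le\delta\}\subset J_u(z_0,\mathcal P_m,M)$, where $z_0=(\mathrm x_0,g(\mathrm x_0))$ and $\mathcal P_m=T_{g,m,\mathrm x_0}$. Then there exists a constant $C$ depending only on $m$ and $s$ such that for all $i_1,\dots,i_{m+1}\in\{1,\dots,u\}$, $\left\|\frac{\partial^{m+1}g(\mathrm x_0)}{\partial\mathrm x_{i_1}\cdots\partial\mathrm x_{i_{m+1}}}\right\|\le CM$.
   Context: For $g$ of class $C^{m+1}$, $T_{g,m,p}(h)=\sum_{k=1}^m\frac1{k!}D^kg(p)(h^{[k]})$ with $h^{[k]}=(h,\dots,h)$. For a polynomial $\mathcal P_m:\mathbb{R}^u\to\mathbb{R}^s$ of degree $m$ with $\mathcal P_m(0)=0$, $z_0\in\mathbb{R}^u\times\mathbb{R}^s$, $M>0$: $J_u(z_0,\mathcal P_m,M)=\{z_0+(\mathrm x,\mathrm y+\mathcal P_m(\mathrm x)):\|\mathrm y\|\le M\|\mathrm x\|^{m+1}\}$. Norms Euclidean. *)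

(* Defs.v *)
From HB Require Import structures.
From mathcomp Require Import all_boot all_order all_algebra.
From mathcomp Require Import all_classical all_reals all_analysis.
Set Implicit Arguments. Unset Strict Implicit. Unset Printing Implicit Defensive.
Import Order.TTheory GRing.Theory Num.Theory.
Import numFieldNormedType.Exports.
Local Open Scope classical_set_scope.
Local Open Scope ring_scope.

Section Defs.
Variable R : realType.

(* Euclidean norm on R^n (MathComp's matrix norm is the max norm). *)
Definition enorm (n : nat) (v : 'rV[R]_n) : R :=
  Num.sqrt (\sum_(i < n) v ord0 i ^+ 2).

Definition evec (n : nat) (i : 'I_n) : 'rV[R]_n := delta_mx ord0 i.

Variables u s : nat.

Definition partial (i : 'I_u) (f : 'rV[R]_u -> 'rV[R]_s) : 'rV[R]_u -> 'rV[R]_s :=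
  fun x => 'D_(evec i) f x.

Definition iter_partial (ix : seq 'I_u) (f : 'rV[R]_u -> 'rV[R]_s) :
  'rV[R]_u -> 'rV[R]_s := foldr partial f ix.

Definition is_Ck (k : nat) (D : set 'rV[R]_u) (f : 'rV[R]_u -> 'rV[R]_s) : Prop :=
  open D /\
  forall ix : seq 'I_u, (size ix <= k)%N ->
    (forall x, D x -> {for x, continuous (iter_partial ix f)}) /\
    ((size ix < k)%N -> forall x, D x -> forall i : 'I_u,
        derivable (iter_partial ix f) x (evec i)).

(* D^k f(p)(h,...,h), written in coordinates:
   sum_{i1..ik} h_i1 ... h_ik d^k f(p)/dx_i1...dx_ik *)
Definition Dk (f : 'rV[R]_u -> 'rV[R]_s) (k : nat) (p h : 'rV[R]_u) : 'rV[R]_s :=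
  \sum_(t : k.-tuple 'I_u)
     (\prod_(j < k) h ord0 (tnth t j)) *: iter_partial t f p.

Definition Taylor (f : 'rV[R]_u -> 'rV[R]_s) (m : nat) (p : 'rV[R]_u) :
  'rV[R]_u -> 'rV[R]_s :=
  fun h => \sum_(1 <= k < m.+1) (k`!%:R)^-1 *: Dk f k p h.

Definition Ju (m : nat) (z0 : 'rV[R]_u * 'rV[R]_s) (P : 'rV[R]_u -> 'rV[R]_s)
  (M : R) : set ('rV[R]_u * 'rV[R]_s) :=
  [set z | exists (x : 'rV[R]_u) (y : 'rV[R]_s),
     enorm y <= M * enorm x ^+ m.+1 /\ z = (z0.1 + x, z0.2 + (y + P x))].

End Defs.

(* Main.v *)
Require Import Defs.
From HB Require Import structures.
From mathcomp Require Import all_boot all_order all_algebra.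
From mathcomp Require Import all_classical all_reals all_analysis.
From mathcomp Require Import ring lra.
Import Order.TTheory GRing.Theory Num.Theory.
Import numFieldNormedType.Exports.
Local Open Scope classical_set_scope.
Local Open Scope ring_scope.
Set Implicit Arguments. Unset Strict Implicit. Unset Printing Implicit Defensive.

Section Aux.
Variable R : realType.
Variables u s : nat.
Local Notation V := 'rV[R]_u.
Local Notation W := 'rV[R]_s.

Definition dif (v : V) (F : V -> W) : V -> W := fun x => F (x + v) - F x.
Definition DD (h : R) (ix : seq 'I_u) (F : V -> W) : V -> W :=
  foldr (fun i G => dif (h *: evec R i) G) F ix.

Fixpoint Deg (k : nat) (F : V -> W) : Prop :=
  match k with 0 => forall x y, F x = F y | k'.+1 => forall v, Deg k' (dif v F) end.

Lemma Deg_ext k F G : Deg k F -> (forall x, F x = G x) -> Deg k G.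
Proof. by move=> hF e; have <- : F = G by apply: funext. Qed.

Lemma Deg_add k F G : Deg k F -> Deg k G -> Deg k (fun x => F x + G x).
Proof.
elim: k F G => [|k IH] F G /= hF hG.
  by move=> x y; rewrite (hF x y) (hG x y).
move=> v; apply: (Deg_ext (IH _ _ (hF v) (hG v))) => x.
by rewrite /dif; rewrite opprD addrACA.
Qed.

Lemma Deg_scale k a F : Deg k F -> Deg k (fun x => a *: F x).
Proof.
elim: k F => [|k IH] F /= hF.
  by move=> x y; rewrite (hF x y).
move=> v; apply: (Deg_ext (IH _ (hF v))) => x.
by rewrite /dif scalerBr.
Qed.

Lemma Deg_cst k c : Deg k (fun _ => c).
Proof.
elim: k c => [|k IH] c //= v.
by apply: (Deg_ext (IH 0)) => x; rewrite /dif subrr.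
Qed.

Lemma Deg_S k F : Deg k F -> Deg k.+1 F.
Proof.
elim: k F => [|k IH] F /= hF v.
  by apply: (Deg_ext (Deg_cst 0 0)) => x; rewrite /dif (hF (x + v) x) subrr.
exact: IH.
Qed.

Lemma Deg_le k k' F : (k <= k')%N -> Deg k F -> Deg k' F.
Proof.
move=> /subnK <-; elim: (k' - k)%N => [|n IH] // hF.
by rewrite addSn; apply: Deg_S; apply: IH.
Qed.

Lemma Deg_trans k w F : Deg k F -> Deg k (fun x => F (x + w)).
Proof.
elim: k F => [|k IH] F /= hF.
  by move=> x y; rewrite (hF _ (y + w)).
move=> v; apply: (Deg_ext (IH _ (hF v))) => x.
by rewrite /dif addrAC.
Qed.

Lemma Deg_mul k (L : V -> R) F : (forall x y, L (x + y) = L x + L y) ->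
  Deg k F -> Deg k.+1 (fun x => L x *: F x).
Proof.
move=> HL; elim: k F => [|k IH] F hF v.
  apply: (Deg_ext (Deg_cst 0 (L v *: F v))) => x.
  rewrite /dif HL (hF (x + v) x) (hF v x) scalerDl addrAC subrr add0r.
  done.
have e x : dif v (fun x => L x *: F x) x = L v *: F (x + v) + L x *: dif v F x.
  by rewrite /dif HL scalerDl scalerBr addrA [X in X - _ = _]addrC.
suff H : Deg k.+1 (fun x => L v *: F (x + v) + L x *: dif v F x).
  by apply: (Deg_ext H) => x; rewrite e.
apply: Deg_add.
  by apply: Deg_scale; apply: Deg_trans.
exact: IH.
Qed.

Lemma Deg_sum k (I : eqType) (r : seq I) (P : pred I) (F : I -> V -> W) :
  (forall i, i \in r -> P i -> Deg k (F i)) -> Deg k (fun x => \sum_(i <- r | P i) F i x).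
Proof.
elim: r => [|a r IH] hF.
  by apply: (Deg_ext (Deg_cst k 0)) => x; rewrite big_nil.
have IH' : Deg k (fun x => \sum_(i <- r | P i) F i x).
  by apply: IH => i ir; apply: hF; rewrite inE ir orbT.
case Pa: (P a).
  apply: (Deg_ext (Deg_add (hF a (mem_head _ _) Pa) IH')) => x; by rewrite big_cons Pa.
by apply: (Deg_ext IH') => x; rewrite big_cons Pa.
Qed.

Lemma Deg_DD k h ix F : Deg k F -> (size ix <= k)%N -> Deg (k - size ix) (DD h ix F).
Proof.
move=> hF; elim: ix => [|i ix IH] /=; first by rewrite subn0.
move=> hs; have := IH (ltnW hs).
have -> : (k - size ix = (k - (size ix).+1).+1)%N by rewrite subnSK.
by move=> /(_ (h *: evec R i)).
Qed.

Lemma DD_zero k h ix F x : Deg k F -> size ix = k.+1 -> DD h ix F x = 0.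
Proof.
case: ix => [|i ix] //= hF [e].
have := Deg_DD h hF (eq_leq e); rewrite e subnn => H0.
by rewrite /dif (H0 (x + h *: evec R i) x) subrr.
Qed.

Lemma DD_add h ix F G x : DD h ix (fun x => F x + G x) x = DD h ix F x + DD h ix G x.
Proof.
elim: ix x => [|i ix IH] x //=.
by rewrite /dif !IH opprD addrACA.
Qed.

End Aux.
Section Norms.
Variable R : realType.

Definition L1 n (w : 'rV[R]_n) : R := \sum_(i < n) `|w ord0 i|.

Lemma sum_sq_le (I : Type) (r : seq I) (a : I -> R) : (forall i, 0 <= a i) ->
  \sum_(i <- r) a i ^+ 2 <= (\sum_(i <- r) a i) ^+ 2.
Proof.
move=> a0; elim: r => [|x r IH]; first by rewrite !big_nil expr0n.
rewrite !big_cons.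
have S0 : 0 <= \sum_(i <- r) a i by apply: sumr_ge0.
have := a0 x; nra.
Qed.

Lemma L1_ge0 n (w : 'rV[R]_n) : 0 <= L1 w.
Proof. by apply: sumr_ge0. Qed.

Lemma L1D n (a b : 'rV[R]_n) : L1 (a + b) <= L1 a + L1 b.
Proof.
rewrite /L1 -big_split /=; apply: ler_sum => i _; rewrite mxE; exact: ler_normD.
Qed.

Lemma L1_evec n (i : 'I_n) (t : R) : L1 (t *: evec R i) = `|t|.
Proof.
rewrite /L1 (bigD1 i) //= big1 ?addr0.
  by rewrite !mxE !eqxx mulr1.
by move=> j /negbTE ji; rewrite !mxE ji andbF mulr0 normr0.
Qed.

Lemma entry_le_L1 n (w : 'rV[R]_n) i : `|w ord0 i| <= L1 w.
Proof.
rewrite /L1 (bigD1 i) //= lerDl; apply: sumr_ge0 => *; exact: normr_ge0.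
Qed.

Lemma mxnorm_le_L1 n (w : 'rV[R]_n) : `|w| <= L1 w.
Proof.
rewrite {1}/Num.norm /= mx_normrE.
apply: bigmax_le; first exact: L1_ge0.
move=> [a b] _ /=; rewrite (ord1 a); exact: entry_le_L1.
Qed.

Lemma enorm_le_L1 n (w : 'rV[R]_n) : enorm w <= L1 w.
Proof.
rewrite /enorm -(ger0_norm (L1_ge0 w)) -sqrtr_sqr ler_sqrt; last by rewrite exprn_ge0 // L1_ge0.
rewrite /L1; apply: le_trans (sum_sq_le _ _) => //.
by apply: ler_sum => i _; rewrite real_normK // num_real.
Qed.

Lemma entry_le_enorm n (w : 'rV[R]_n) i : `|w ord0 i| <= enorm w.
Proof.
rewrite /enorm -sqrtr_sqr ler_sqrt; last by apply: sumr_ge0 => *; rewrite sqr_ge0.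
rewrite (bigD1 i) //= lerDl; apply: sumr_ge0 => *; exact: sqr_ge0.
Qed.

End Norms.
Section Der.
Variable R : realType.
Variables u s : nat.
Local Notation V := 'rV[R]_u.
Local Notation W := 'rV[R]_s.

Lemma shift_trans (F : V -> W) w q :
  (fun x => F (x + w)) \o shift q = F \o shift (q + w).
Proof. by apply: funext => y /=; rewrite addrA. Qed.

Lemma derivable_trans (F : V -> W) w q v :
  derivable F (q + w) v -> derivable (fun x => F (x + w)) q v.
Proof. by rewrite /derivable shift_trans. Qed.

Lemma derive_trans (F : V -> W) w q v :
  'D_v (fun x => F (x + w)) q = 'D_v F (q + w).
Proof. by rewrite /derive shift_trans. Qed.

Lemma derivable_dif (F : V -> W) w q v : derivable F (q + w) v -> derivable F q v ->
  derivable (fun x => F (x + w) - F x) q v /\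
  'D_v (fun x => F (x + w) - F x) q = 'D_v F (q + w) - 'D_v F q.
Proof.
move=> h1 h2.
have h1' := derivable_trans h1.
split; first exact: (derivableB h1' h2).
by rewrite (deriveB h1' h2) derive_trans.
Qed.

End Der.

Section DDder.
Variable R : realType.
Variables u s : nat.
Local Notation V := 'rV[R]_u.
Local Notation W := 'rV[R]_s.

Lemma L10 n : L1 (0 : 'rV[R]_n) = 0.
Proof. by rewrite /L1 big1 // => k _; rewrite mxE normr0. Qed.

Lemma DDder (h : R) (h0 : 0 <= h) ix (F : V -> W) i q :
  (forall w, L1 w <= h * (size ix)%:R -> derivable F (q + w) (evec R i)) ->
  derivable (DD h ix F) q (evec R i) /\
  'D_(evec R i) (DD h ix F) q = DD h ix (partial i F) q.
Proof.
elim: ix q => [|j ix IH] q hF /=.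
  by have := hF 0; rewrite addr0 L10 mulr0 lexx => /(_ isT) d.
set v := h *: evec R j.
have [d1 e1] : derivable (DD h ix F) (q + v) (evec R i) /\
  'D_(evec R i) (DD h ix F) (q + v) = DD h ix (partial i F) (q + v).
  apply: IH => w hw; rewrite -addrA; apply: hF.
  apply: le_trans (L1D _ _) _; rewrite L1_evec ger0_norm //.
  by rewrite -natr1 mulrDr mulr1 addrC lerD2r.
have hle : h * (size ix)%:R <= h * (size (j :: ix))%:R.
  by rewrite ler_wpM2l // ler_nat /=.
have [d2 e2] := IH q (fun w hw => hF w (le_trans hw hle)).
have [d3 e3] := derivable_dif d1 d2.
by split => //; rewrite /dif e3 e1 e2.
Qed.

End DDder.

Section Line.
Variable R : realType.
Variables u s : nat.
Local Notation V := 'rV[R]_u.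
Local Notation W := 'rV[R]_s.

Lemma deriv_line (H : V -> W) p (e : V) c t : derivable H (p + t *: e) e ->
  is_derive t 1 (fun t => H (p + t *: e) ord0 c) (('D_e H (p + t *: e)) ord0 c).
Proof.
move=> d; set q := p + t *: e.
have E : (fun r : R => r^-1 *: (((fun t => H (p + t *: e) ord0 c) \o shift t) (r *: 1)
            - H (p + t *: e) ord0 c)) =
         (fun M : W => M ord0 c) \o (fun r => r^-1 *: ((H \o shift q) (r *: e) - H q)).
  apply: funext => r /=; rewrite [in RHS]mxE [in RHS]mxE [in RHS]mxE.
  rewrite /q; congr (_ * (H _ _ _ - _)).
  by rewrite /GRing.scale /= mulr1 scalemxDl addrCA.
have cv : ((fun M : W => M ord0 c) \o (fun r => r^-1 *: ((H \o shift q) (r *: e) - H q))) @ 0^' --> ('D_e H q) ord0 c.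
  by apply: continuous_cvg; [exact: coord_continuous | exact: d].
apply: DeriveDef.
  by rewrite /derivable E; apply: cvgP cv.
by rewrite /derive E; apply: cvg_lim cv.
Qed.

End Line.

Section Chain.
Variable R : realType.
Variables u s : nat.
Local Notation V := 'rV[R]_u.
Local Notation W := 'rV[R]_s.

Lemma L1_split (a b c : V) : L1 (a + b - c) <= L1 (a - c) + L1 b.
Proof. by rewrite addrAC; apply: L1D. Qed.

Lemma addr4_perm (a b c d : V) : a + b + (c - d) = (a - d) + b + c.
Proof. by rewrite addrA [a - d + b]addrAC [RHS]addrAC. Qed.

Lemma L1_3 (a b c d : V) : L1 (a + b + (c - d)) <= L1 (a - d) + L1 b + L1 c.
Proof.
rewrite addr4_perm; apply: le_trans (L1D _ _) _; rewrite lerD2r; exact: L1D.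
Qed.

Lemma chain (g : V -> W) (x0 : V) (eps : R) (N : nat)
  (Hder : forall jx : seq 'I_u, (size jx < N)%N -> forall x, L1 (x - x0) < eps ->
     forall i, derivable (iter_partial jx g) x (evec R i))
  (h : R) (h0 : 0 < h) :
  forall ix jx p c, (size ix + size jx <= N)%N ->
  L1 (p - x0) + h * (size ix)%:R < eps ->
  exists xi, L1 (xi - p) <= h * (size ix)%:R /\
    DD h ix (iter_partial jx g) p ord0 c =
    h ^+ size ix * iter_partial (rev ix ++ jx) g xi ord0 c.
Proof.
elim=> [|i ix IH] jx p c hs hp.
  by exists p; rewrite subrr L10 mulr0 expr0 mul1r.
set F := iter_partial jx g.
set e := evec R i.
rewrite /= in hs hp.
have hsjx : (size jx < N)%N by apply: leq_trans hs; rewrite addSn ltnS leq_addl.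
have hle n : h * n%:R <= h * n.+1%:R.
  by apply: ler_wpM2l; [exact: ltW | rewrite ler_nat].
have hd t : 0 <= t <= h ->
  derivable (DD h ix F) (p + t *: e) e /\
  'D_e (DD h ix F) (p + t *: e) = DD h ix (partial i F) (p + t *: e).
  move=> /andP[t0 th]; apply: DDder; first exact: ltW.
  move=> w hw; apply: Hder => //.
  rewrite -addrA; apply: le_lt_trans (L1_3 _ _ _ _) _.
  rewrite L1_evec ger0_norm //; apply: le_lt_trans _ hp; rewrite -addrA lerD2l.
  by rewrite -natr1 mulrDr mulr1 addrC lerD.
set phi := fun t => DD h ix F (p + t *: e) ord0 c.
set dphi := fun t => DD h ix (partial i F) (p + t *: e) ord0 c.
have hder t : 0 <= t <= h -> is_derive t 1 phi (dphi t).
  move=> /hd [d1 e1]; rewrite /dphi -e1; exact: deriv_line.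
have [t0 t0in ht0] : exists2 t0, t0 \in `]0, h[%R & phi h - phi 0 = dphi t0 * (h - 0).
  apply: MVT => //.
    move=> x; rewrite in_itv /= => /andP[x0' xh]; apply: hder.
    by rewrite !ltW.
  apply: derivable_within_continuous => x; rewrite in_itv /= => hx.
  by have := hder x hx => -[].
move: t0in; rewrite in_itv /= => /andP[t0p t0h].
have hs' : (size ix + size (i :: jx) <= N)%N by rewrite /= addnS -addSn.
have hp' : L1 (p + t0 *: e - x0) + h * (size ix)%:R < eps.
  apply: le_lt_trans _ hp.
  apply: (le_trans (lerD (L1_split p (t0 *: e) x0) (lexx _))).
  rewrite L1_evec ger0_norm ?ltW // -natr1 mulrDr mulr1.
  by rewrite -addrA ltrD2l [t0 + _]addrC ltrD2l.
have [xi [hxi exi]] := IH _ _ c hs' hp'.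
exists xi; split.
  have -> : xi - p = xi - (p + t0 *: e) + t0 *: e by rewrite opprD addrA subrK.
  apply: le_trans (L1D _ _) _; rewrite L1_evec ger0_norm ?ltW //.
  by rewrite -natr1 mulrDr mulr1; apply: ler_ltD.
have -> : DD h (i :: ix) F p ord0 c = phi h - phi 0.
  by rewrite /phi scale0r addr0 /= /dif !mxE.
rewrite ht0 subr0 /dphi.
change (DD h ix (iter_partial (i :: jx) g) (p + t0 *: e) ord0 c * h =
  h ^+ (size ix).+1 * iter_partial (rev (i :: ix) ++ jx) g xi ord0 c).
by rewrite exi mulrAC -exprSr rev_cons cat_rcons.
Qed.

End Chain.

Section Taylor.
Variable R : realType.
Variables u s : nat.
Local Notation V := 'rV[R]_u.
Local Notation W := 'rV[R]_s.

Lemma Deg_mono k (f : 'I_k -> 'I_u) (c : W) :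
  Deg k (fun x : V => (\prod_(j < k) x ord0 (f j)) *: c).
Proof.
elim: k f => [|k IH] f.
  by apply: (Deg_ext (Deg_cst u 0 c)) => x; rewrite big_ord0 scale1r.
have hL : forall x y : V, (x + y) ord0 (f ord0) = x ord0 (f ord0) + y ord0 (f ord0).
  by move=> x y; rewrite mxE.
have H := Deg_mul hL (IH (fun j => f (lift ord0 j))).
by apply: (Deg_ext H) => x; rewrite big_ord_recl scalerA.
Qed.

Lemma Deg_Dk (g : V -> W) k p : Deg k (Dk g k p).
Proof.
rewrite /Dk; apply: Deg_sum => t _ _; exact: Deg_mono.
Qed.

Lemma Deg_Taylor (g : V -> W) m p : Deg m (Taylor g m p).
Proof.
rewrite /Taylor; apply: Deg_sum => k; rewrite mem_index_iota => /andP[_ km] _.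
by apply: Deg_scale; apply: (Deg_le (km : (k <= m)%N)); apply: Deg_Dk.
Qed.

Lemma DD_bound (h : R) (h0 : 0 <= h) ix (F : V -> W) p c B :
  (forall w, L1 w <= h * (size ix)%:R -> `|F (p + w) ord0 c| <= B) ->
  `|DD h ix F p ord0 c| <= 2 ^+ (size ix) * B.
Proof.
elim: ix p => [|i ix IH] p hF /=.
  by rewrite expr0 mul1r; have := hF 0; rewrite addr0 L10 mulr0 lexx; apply.
rewrite /dif !mxE exprS -mulrA mulr_natl mulr2n.
apply: le_trans (ler_normB _ _) (lerD _ _).
  apply: IH => w hw; rewrite -addrA; apply: hF.
  apply: le_trans (L1D _ _) _; rewrite L1_evec ger0_norm //.
  by rewrite -natr1 mulrDr mulr1 addrC lerD2r.
apply: IH => w hw; apply: hF; apply: le_trans hw _.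
by apply: ler_wpM2l => //; rewrite ler_nat.
Qed.

End Taylor.

Theorem lemma4p2 (R : realType) (m s : nat) :
  exists C : R,
  forall (u : nat) (D : set 'rV[R]_u) (g : 'rV[R]_u -> 'rV[R]_s)
         (x0 : 'rV[R]_u) (M delta : R),
    is_Ck m.+1 D g -> D x0 -> 0 < M -> 0 < delta ->
    (forall x : 'rV[R]_u, D x -> enorm (x - x0) <= delta ->
       Ju m (x0, g x0) (Taylor g m x0) M (x, g x)) ->
    forall ix : seq 'I_u, size ix = m.+1 ->
      enorm (iter_partial ix g x0) <= C * M.
Proof.
set K : R := 2 ^+ m.+1 * (m.+1)%:R ^+ m.+1.
exists (s%:R * K) => u D g x0 M delta [hopen hk] Dx0 M0 d0 HJ ix hix.
have K0 : 0 <= K by rewrite /K mulr_ge0 // exprn_ge0 // ler0n.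
have [e e0 he] : exists2 e : R, 0 < e & ball x0 e `<=` D.
  apply/nbhs_ballP; apply: open_nbhs_nbhs; split => //.
set eps := Num.min e delta.
have eps0 : 0 < eps by rewrite lt_min e0 d0.
have inD x : L1 (x - x0) < eps -> D x /\ enorm (x - x0) <= delta.
  move=> hx; split.
    apply: he; rewrite -ball_normE /= distrC.
    apply: le_lt_trans (mxnorm_le_L1 _) (lt_le_trans hx _); by rewrite ge_min lexx.
  apply: le_trans (enorm_le_L1 _) _; apply: ltW; apply: lt_le_trans hx _.
  by rewrite ge_min lexx orbT.
have Hder : forall jx : seq 'I_u, (size jx < m.+1)%N -> forall x, L1 (x - x0) < eps ->
    forall i, derivable (iter_partial jx g) x (evec R i).
  move=> jx hj x hx i; have [Dx _] := inD x hx; exact: ((hk jx (ltnW hj)).2 hj x Dx i).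
set P := Taylor g m x0.
set Q := fun x => g x0 + P (x - x0).
have degQ : Deg m Q.
  exact: (Deg_add (Deg_cst u m (g x0)) (Deg_trans (- x0) (Deg_Taylor g m x0))).
set r := fun x => g x - Q x.
have hr x : L1 (x - x0) < eps -> enorm (r x) <= M * L1 (x - x0) ^+ m.+1.
  move=> hx; have [Dx dx] := inD x hx.
  have [x' [y [hy E]]] := HJ x Dx dx.
  case: E => ex eg.
  have ex' : x' = x - x0 by rewrite ex addrC addKr.
  subst x'.
  have -> : r x = y by rewrite /r /Q eg opprD addrACA subrr add0r addrK.
  apply: le_trans hy _; apply: ler_wpM2l; first exact: ltW.
  apply: lerXn2r; rewrite ?nnegrE ?L1_ge0 ?sqrtr_ge0 //; exact: enorm_le_L1.
have hDD h c : (DD h (rev ix) g x0) ord0 c = (DD h (rev ix) r x0) ord0 c.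
  have -> : g = (fun x => r x + Q x) by apply: funext => x; rewrite /r subrK.
  by rewrite DD_add (DD_zero _ _ degQ) ?size_rev // addr0.
set G := iter_partial ix g.
have hc c : `|G x0 ord0 c| <= K * M.
  have hle : (size ix <= m.+1)%N by rewrite hix.
  have hcont : {for x0, continuous G} := (hk ix hle).1 x0 Dx0.
  have cG : ((fun Mx : 'rV[R]_s => Mx ord0 c) \o G) @ x0 --> G x0 ord0 c.
    exact: (@continuous_cvg _ _ _ (nbhs x0) _ G (fun Mx : 'rV[R]_s => Mx ord0 c) (G x0) (@coord_continuous R 1 s ord0 c (G x0)) hcont).
  apply/ler_addgt0Pr => eta eta0.
  move: (cG) => /cvgrPdist_lt /(_ eta eta0) /nbhs_ballP [rho rho0 hrho].
  set mn := Num.min eps rho.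
  have mn0 : 0 < mn by rewrite lt_min eps0 rho0.
  have n0 : 0 < (m.+1)%:R :> R by rewrite ltr0n.
  set h := mn / (2 * (m.+1)%:R).
  have h0 : 0 < h by rewrite divr_gt0 // mulr_gt0.
  have hm : h * (m.+1)%:R < mn.
    have -> : h * (m.+1)%:R = mn / 2.
      by rewrite /h; field; rewrite gt_eqF.
    lra.
  have hm1 : h * (m.+1)%:R < eps by apply: lt_le_trans hm _; rewrite ge_min lexx.
  have hm2 : h * (m.+1)%:R < rho by apply: lt_le_trans hm _; rewrite ge_min lexx orbT.
  have hs1 : (size (rev ix) + size ([::] : seq 'I_u) <= m.+1)%N by rewrite size_rev hix addn0.
  have hp1 : L1 (x0 - x0) + h * (size (rev ix))%:R < eps by rewrite subrr L10 add0r size_rev hix.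
  have [xi [hxi exi]] := chain Hder h0 c hs1 hp1.
  rewrite size_rev hix in hxi.
  rewrite cats0 revK in exi; rewrite size_rev hix in exi.
  have hb := @DD_bound R u s h (ltW h0) (rev ix) r x0 c (M * (h * (m.+1)%:R) ^+ m.+1).
  have hsz : size (rev ix) = m.+1 by rewrite size_rev.
  rewrite hsz in hb.
  have {}hb : `|DD h (rev ix) r x0 ord0 c| <= 2 ^+ m.+1 * (M * (h * (m.+1)%:R) ^+ m.+1).
    apply: hb => w hw.
    have hw' : L1 (x0 + w - x0) < eps.
      by rewrite addrC addKr; exact: le_lt_trans hw hm1.
    apply: le_trans (entry_le_enorm _ _) _; apply: le_trans (hr _ hw') _.
    rewrite addrC addKr; apply: ler_wpM2l; first exact: ltW.
    apply: lerXn2r; rewrite ?nnegrE ?L1_ge0 //.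
    by apply: mulr_ge0; [exact: ltW | exact: ler0n].
  have e3 : h ^+ m.+1 * G xi ord0 c = DD h (rev ix) r x0 ord0 c.
    by rewrite /G -exi -hDD.
  have hxib : `|G xi ord0 c| <= K * M.
    have : h ^+ m.+1 * `|G xi ord0 c| <= h ^+ m.+1 * (K * M).
      rewrite -{1}(ger0_norm (exprn_ge0 _ (ltW h0))) -normrM e3.
      apply: le_trans hb _.
      suff -> : 2 ^+ m.+1 * (M * (h * (m.+1)%:R) ^+ m.+1) = h ^+ m.+1 * (K * M) by [].
      by rewrite /K exprMn; ring.
    by rewrite ler_pM2l ?exprn_gt0.
  have bx : ball x0 rho xi.
    rewrite -ball_normE /= distrC.
    exact: le_lt_trans (mxnorm_le_L1 _) (le_lt_trans hxi hm2).
  have := hrho xi bx; rewrite /= => hd.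
  rewrite -[X in `|X| <= _](subrK (G xi ord0 c)).
  apply: le_trans (ler_normD _ _) _; rewrite addrC.
  by apply: lerD => //; apply: ltW.
apply: le_trans (enorm_le_L1 _) _; rewrite /L1.
apply: le_trans (ler_sum _ (fun c _ => hc c)) _.
by rewrite sumr_const card_ord -mulrA mulr_natl.
Qed.
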